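(* Fix $k\ge0$ and let $\Lambda$ be a locally convex $(k+1)$-graph with $\Gamma=d^{-1}(\mathbb N^k\times\{0\})$. If $v\in\Lambda^0$ and $F\subseteq v\Gamma$ is a finite set that is exhaustive in $\Gamma$, then $F$ is exhaustive in $\Lambda$.
   Context: A $(k+1)$-graph is a countable small category $\Lambda$ with a functor $d:\Lambda\to\mathbb N^{k+1}$ such that whenever $d(\lambda)=m+n$ there are unique $\mu,\nu$ with $\lambda=\mu\nu$, $d(\mu)=m$, $d(\nu)=n$; $\Lambda^n=d^{-1}(n)$, $e_i$ the standard basis vectors. $\Lambda$ is locally convex if for $i\ne j$, whenever $e\in\Lambda^{e_i}$ and $r(e)\Lambda^{e_j}\ne\emptyset$, we have $s(e)\Lambda^{e_j}\ne\emptyset$. $\Gamma$ is a $k$-graph (subcategory). For a category $\mathcal C$ and $v\in\mathcal C^0$, $F\subseteq v\mathcal C$ is exhaustive in $\mathcal C$ if for every $c\in v\mathcal C$ there is $a\in F$ with $c\mathcal C\cap a\mathcal C\ne\emptyset$. *)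

(* Defs.v *)
From mathcomp Require Import all_boot.
Set Implicit Arguments. Unset Strict Implicit. Unset Printing Implicit Defensive.

(* A small category with a degree functor into N^n (N^n represented as
   functions 'I_n -> nat, compared pointwise). *)
Record degcat (n : nat) := DegCat {
  Obj : countType;
  Mor : countType;
  src : Mor -> Obj;
  rng : Mor -> Obj;
  idm : Obj -> Mor;
  comp : Mor -> Mor -> Mor;
  deg : Mor -> 'I_n -> nat;
  src_idm : forall v, src (idm v) = v;
  rng_idm : forall v, rng (idm v) = v;
  src_comp : forall mu nu, src mu = rng nu -> src (comp mu nu) = src nu;
  rng_comp : forall mu nu, src mu = rng nu -> rng (comp mu nu) = rng mu;
  comp_idl : forall mu, comp (idm (rng mu)) mu = mu;
  comp_idr : forall mu, comp mu (idm (src mu)) = mu;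
  compA : forall l mu nu, src l = rng mu -> src mu = rng nu ->
            comp l (comp mu nu) = comp (comp l mu) nu;
  deg_idm : forall v i, deg (idm v) i = 0;
  deg_comp : forall mu nu, src mu = rng nu ->
            forall i, deg (comp mu nu) i = deg mu i + deg nu i
}.

Definition is_kgraph (n : nat) (L : degcat n) : Prop :=
  forall (lam : Mor L) (m p : 'I_n -> nat),
    (forall i, deg lam i = m i + p i) ->
    (exists mu nu, src mu = rng nu /\ lam = comp mu nu /\
        (forall i, deg mu i = m i) /\ (forall i, deg nu i = p i)) /\
    (forall mu nu mu' nu',
        src mu = rng nu -> lam = comp mu nu ->
        (forall i, deg mu i = m i) -> (forall i, deg nu i = p i) ->
        src mu' = rng nu' -> lam = comp mu' nu' ->
        (forall i, deg mu' i = m i) -> (forall i, deg nu' i = p i) ->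
        mu = mu' /\ nu = nu').

Definition basis (n : nat) (i : 'I_n) : 'I_n -> nat :=
  fun j => if j == i then 1 else 0.

Definition has_degree (n : nat) (L : degcat n) (lam : Mor L) (m : 'I_n -> nat) :=
  forall j, deg lam j = m j.

Definition locally_convex (n : nat) (L : degcat n) : Prop :=
  forall (i j : 'I_n), i != j ->
  forall e : Mor L, has_degree e (basis i) ->
    (exists f : Mor L, rng f = rng e /\ has_degree f (basis j)) ->
    (exists g : Mor L, rng g = src e /\ has_degree g (basis j)).

Definition inGamma (k : nat) (L : degcat k.+1) (lam : Mor L) : Prop :=
  deg lam ord_max = 0.

Definition exhaustive_in (n : nat) (L : degcat n) (inC : Mor L -> Prop)
    (v : Obj L) (F : seq (Mor L)) : Prop :=
  forall c : Mor L, inC c -> rng c = v ->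
    exists2 a, a \in F &
      exists g1 g2 : Mor L, inC g1 /\ inC g2 /\
        src c = rng g1 /\ src a = rng g2 /\ comp c g1 = comp a g2.

(* Main.v *)
Require Import Defs.
Set Implicit Arguments. Unset Strict Implicit.
From mathcomp Require Import all_boot.
From mathcomp Require Import zify.
From Stdlib Require Import Classical.
Import Defs.

Lemma fact_ex (n : nat) (L : degcat n) : is_kgraph L ->
  forall (lam : Mor L) (m p : 'I_n -> nat), (forall i, deg lam i = m i + p i) ->
  exists mu nu, src mu = rng nu /\ lam = comp mu nu /\
        has_degree mu m /\ has_degree nu p.
Proof. move=> H lam m p hd; case: (H lam m p hd) => [[mu [nu hh]] _]. by exists mu; exists nu. Qed.

Lemma fact_uniq (n : nat) (L : degcat n) : is_kgraph L ->
  forall mu nu mu' nu' : Mor L, src mu = rng nu -> src mu' = rng nu' ->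
  comp mu nu = comp mu' nu' -> (forall i, deg mu i = deg mu' i) ->
  mu = mu' /\ nu = nu'.
Proof.
move=> H mu nu mu' nu' h1 h2 he hd.
have hd2 : forall i, deg nu i = deg nu' i.
  move=> i; have := deg_comp h1 i; have := deg_comp h2 i; rewrite he hd => -> /eqP.
  by rewrite eqn_add2l => /eqP.
case: (H (comp mu nu) (deg mu) (deg nu) (deg_comp h1)) => _ U.
apply: (U mu nu mu' nu') => //; by move=> i; rewrite ?hd ?hd2.
Qed.

Lemma deg0_src (n : nat) (L : degcat n) : is_kgraph L ->
  forall nu : Mor L, (forall i, deg nu i = 0) -> src nu = rng nu.
Proof.
move=> H nu h0.
have e1 : src nu = rng (idm (src nu)) by rewrite rng_idm.
have e2 : src (idm (rng nu)) = rng nu by rewrite src_idm.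
have he : comp nu (idm (src nu)) = comp (idm (rng nu)) nu by rewrite comp_idl comp_idr.
have [hnu _] := fact_uniq H e1 e2 he (fun i => ltac:(by rewrite h0 deg_idm)).
by rewrite {1}hnu src_idm.
Qed.

Lemma sum_ge (T : eqType) (f : T -> nat) (s : seq T) x :
  x \in s -> f x <= \sum_(y <- s) f y.
Proof.
elim: s => [//|y s IH]; rewrite in_cons big_cons => /orP [/eqP ->|h].
  by apply: leq_addr.
by apply: leq_trans (IH h) _; apply: leq_addl.
Qed.

Lemma transfer k (L : degcat k.+1) : is_kgraph L -> locally_convex L ->
  forall n (nu : Mor L), (forall j, deg nu j = if j == ord_max then n else 0) ->
  forall i, i != ord_max -> (exists f, rng f = rng nu /\ has_degree f (basis i)) ->
  exists g, rng g = src nu /\ has_degree g (basis i).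
Proof.
move=> H HL; elim=> [|n IH] nu hd i hi hf.
  rewrite deg0_src //; by move=> j; rewrite hd; case: ifP.
have hd' : forall j, deg nu j = basis ord_max j + (if j == ord_max then n else 0).
  by move=> j; rewrite hd /basis; case: ifP.
case: (fact_ex H hd') => e [nu2 [hc [hnu [he hn2]]]].
have : exists g, rng g = src e /\ has_degree g (basis i).
  apply: (HL ord_max i) => //; first by rewrite eq_sym.
  by case: hf => f [hf1 hf2]; exists f; rewrite hf1 hnu rng_comp.
case=> g [hg1 hg2].
rewrite hnu src_comp //; apply: (IH nu2) => //; by exists g; rewrite hg1.
Qed.

Definition maximal k (L : degcat k.+1) (M : 'I_k.+1 -> nat) (b : Mor L) :=
  forall i, i != ord_max -> deg b i < M i ->
  forall f, rng f = src b -> ~ has_degree f (basis i).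

Lemma greedy k (L : degcat k.+1) (M : 'I_k.+1 -> nat) :
  forall N (g : Mor L), \sum_i (M i - deg g i) <= N -> (forall i, deg g i <= M i) ->
  exists eta, rng eta = src g /\ deg eta ord_max = 0 /\
    (forall i, deg (comp g eta) i <= M i) /\ maximal M (comp g eta).
Proof.
have stop : forall g : Mor L, (forall i, deg g i <= M i) ->
   ~ (exists i f, i != ord_max /\ deg g i < M i /\ rng f = src g /\ has_degree f (basis i)) ->
   exists eta, rng eta = src g /\ deg eta ord_max = 0 /\
    (forall i, deg (comp g eta) i <= M i) /\ maximal M (comp g eta).
  move=> g hle hP; exists (idm (src g)); rewrite rng_idm deg_idm comp_idr.
  split=> //; split=> //; split=> // i hi hlt f hf hdf; apply: hP.
  by exists i, f.
elim=> [|N IH] g hN hle; case: (classic (exists i f, i != ord_max /\ deg g i < M i /\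
     rng f = src g /\ has_degree f (basis i))) => hP; try by apply: stop.
  exfalso; case: hP => i [f [_ [hlt _]]].
  move: hN; rewrite (bigD1 i) //=; lia.
case: hP => i [f [hi [hlt [hf hdf]]]].
have hs : src g = rng f by [].
have hdeg : forall j, deg (comp g f) j = deg g j + basis i j.
  by move=> j; rewrite deg_comp // hdf.
have [eta' [h1 [h2 [h3 h4]]]] : exists eta, rng eta = src (comp g f) /\ deg eta ord_max = 0 /\
    (forall i, deg (comp (comp g f) eta) i <= M i) /\ maximal M (comp (comp g f) eta).
  apply: IH.
    rewrite -ltnS; apply: leq_trans hN.
    rewrite (bigD1 i) //= [X in _ < X](bigD1 i) //=.
    rewrite (eq_bigr (fun j => M j - deg g j)); last first.
      by move=> j /negbTE hj; rewrite hdeg /basis hj addn0.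
    rewrite ltn_add2r hdeg /basis eqxx; lia.
  move=> j; rewrite hdeg /basis; case: eqP => [->|_]; last by rewrite addn0.
  by rewrite addn1.
have hs2 : src f = rng eta' by rewrite h1 src_comp.
exists (comp f eta'); rewrite rng_comp // -hf; split=> //.
rewrite deg_comp // h2 hdf /basis eq_sym (negbTE hi); split=> //.
by rewrite compA.
Qed.

Unset Implicit Arguments. Set Strict Implicit.

Theorem lemma3p17 (k : nat) (L : degcat k.+1) :
  is_kgraph L -> locally_convex L ->
  forall (v : Obj L) (F : seq (Mor L)),
    (forall a, a \in F -> rng a = v /\ inGamma a) ->
    exhaustive_in (@inGamma k L) v F ->
    exhaustive_in (fun _ : Mor L => True) v F.
Proof.
move=> H HL v F hF hex c _ hcv.
pose M := fun i : 'I_k.+1 => if i == ord_max then 0 else deg c i + \sum_(a <- F) deg a i.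
have hc : forall j, deg c j = (if j == ord_max then deg c j else 0) +
                               (if j == ord_max then 0 else deg c j).
  by move=> j; case: ifP => _; rewrite ?addn0.
case: (fact_ex H hc) => nu0 [mu0 [hs0 [hceq [hnu0 hmu0]]]].
have [eta [he1 [he2 [he3 he4]]]] := @greedy k L M _ mu0 (leqnn _)
  (fun i => ltac:(rewrite hmu0 /M; case: ifP => _ //; apply: leq_addr)).
set b0 := comp mu0 eta.
have hsb : src nu0 = rng b0 by rewrite /b0 rng_comp.
have hb' : forall i, deg (comp nu0 b0) i = deg b0 i + deg nu0 i.
  by move=> i; rewrite deg_comp // addnC.
case: (fact_ex H hb') => b [nu' [hs' [hbeq [hdb hdnu']]]].
have hb0last : deg b0 ord_max = 0.
  by rewrite /b0 deg_comp // he2 hmu0 eqxx.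
have hbG : inGamma b by rewrite /inGamma hdb.
have hbv : rng b = v.
  have : rng (comp b nu') = rng (comp nu0 b0) by rewrite hbeq.
  by rewrite !rng_comp // => ->; rewrite -hcv hceq rng_comp.
have hsrc : src nu' = src b0.
  have : src (comp b nu') = src (comp nu0 b0) by rewrite hbeq.
  by rewrite !src_comp.
case: (hex b hbG hbv) => a aF [g1 [g2 [hg1 [hg2 [hsb1 [hsa2 hbg]]]]]].
have hle : forall i, deg a i <= deg b i.
  move=> i; case: (eqVneq i ord_max) => [->|hi].
    by case: (hF a aF) => _ ->.
  rewrite leqNgt; apply/negP => hlt.
  have haM : deg a i <= M i.
    rewrite /M (negbTE hi); apply: leq_trans (sum_ge (fun x => deg x i) aF) _.
    apply: leq_addl.
  have hg1i : 1 <= deg g1 i.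
    have := f_equal (fun x => deg x i) hbg; rewrite /= !deg_comp //; lia.
  have hg1d : forall j, deg g1 j = basis i j + (deg g1 j - basis i j).
    move=> j; rewrite /basis; case: eqP => [->|_]; last by rewrite subn0.
    lia.
  case: (fact_ex H hg1d) => e [r [hse [hgeq [hde _]]]].
  have [g [hg hgd]] : exists g, rng g = src nu' /\ has_degree g (basis i).
    apply: (@transfer k L H HL (deg c ord_max) nu') => //.
      move=> j; rewrite hdnu' hnu0; case: eqP => [->|] //.
    exists e; split=> //; rewrite -hs' hsb1 hgeq rng_comp //.
  apply: (he4 i hi _ g) => //.
    rewrite -/b0 -hdb; lia.
  by rewrite hg hsrc.
have hbd : forall i, deg b i = deg a i + (deg b i - deg a i).
  by move=> i; rewrite subnKC.
case: (fact_ex H hbd) => a' [r [hsa' [hbeq2 [hda' _]]]].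
have hsr : src r = rng g1 by rewrite -hsb1 hbeq2 src_comp.
have [ha' _] : a' = a /\ comp r g1 = g2.
  apply: (fact_uniq H) => //; first by rewrite rng_comp.
  by rewrite compA // -hbeq2.
subst a'.
exists a => //; exists eta, (comp r nu'); split=> //; split=> //.
have hsr' : src r = rng nu' by rewrite -hs' hbeq2 src_comp.
split; first by rewrite he1 hceq src_comp.
split; first by rewrite rng_comp.
rewrite hceq -compA // -/b0 hbeq hbeq2 -compA //.
Qed.
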